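(* Fix $n\ge3$ and $M>0$ satisfying (A) and (B), and consider the environments $\Gamma^\epsilon$. Then for all sufficiently small $\epsilon>0$, the unanimity rule $f^{(n)}$ maximizes $W^\epsilon(f)$ among all SCFs $f:V^n\to[0,1]$ that are ordinal and anonymous.
   Context: Fix $n\ge 3$ agents $N=\{1,\dots,n\}$, choosing between Reform $R$ (agent $i$'s utility $v_i$) and Status quo $S$ (utility $0$). Let $M>0$ satisfy (A): $\frac{2}{n}\left[-M^2+M+n-2\right]+\frac{n-2}{n}\left[2M+n-4\right]<0$, and (B): $2M-(n-2)>0$. Let $V=\{-M^2,-1,1,M\}$. For $\epsilon\in[0,1/4]$, the environment $\Gamma^\epsilon$ has independent values $\tilde v_1,\dots,\tilde v_n$ with distributions: for agents $1,2$ (''high-stakes''): $\Pr(-M^2)=0.5-\epsilon$, $\Pr(-1)=\epsilon$, $\Pr(1)=\epsilon$, $\Pr(M)=0.5-\epsilon$; for agents $3,\dots,n$ (''low-stakes''): $\Pr(-M^2)=\epsilon$, $\Pr(-1)=0.5-\epsilon$, $\Pr(1)=0.5-\epsilon$, $\Pr(M)=\epsilon$. An SCF is any $f:V^n\to[0,1]$ (probability of choosing $R$). $f$ is anonymous if $f(v)=f(\pi v)$ for every $v\in V^n$ and every permutation $\pi$ of $N$, where $\pi v=(v_{\pi(1)},\dots,v_{\pi(n)})$. For $v\in V^n$ let $\chi(v)=\{i:v_i>0\}$; $f$ is ordinal if $f(v)=f(v')$ whenever $\chi(v)=\chi(v')$. The unanimity rule is $f^{(n)}(v)=1$ if $|\chi(v)|=n$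 and $0$ otherwise. The welfare of $f$ in $\Gamma^\epsilon$ is $W^\epsilon(f)=\mathbb{E}^\epsilon\big(f(\tilde v)\sum_i\tilde v_i\big)$, expectation under the distributions of $\Gamma^\epsilon$. *)

(* Defs.v *)
From HB Require Import structures.
From mathcomp Require Import all_boot all_order all_algebra all_fingroup.
From mathcomp Require Import reals.
Set Implicit Arguments. Unset Strict Implicit. Unset Printing Implicit Defensive.
Import Order.TTheory GRing.Theory Num.Theory.
Local Open Scope ring_scope.

(* Labels of the four values of V = {-M^2, -1, 1, M}. *)
Inductive vlab := LmM2 | Lm1 | L1 | LM.

Definition vlab_code (x : vlab) : 'I_4 :=
  match x with LmM2 => inord 0 | Lm1 => inord 1 | L1 => inord 2 | LM => inord 3 end.
Definition vlab_decode (i : 'I_4) : vlab :=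
  match val i with 0 => LmM2 | 1 => Lm1 | 2 => L1 | _ => LM end.
Lemma vlab_codeK : cancel vlab_code vlab_decode.
Proof. by case; rewrite /vlab_decode /= inordK. Qed.
HB.instance Definition _ := Finite.copy vlab (can_type vlab_codeK).

Definition vval (R : realType) (M : R) (x : vlab) : R :=
  match x with LmM2 => - M ^+ 2 | Lm1 => -1 | L1 => 1 | LM => M end.

(* Value profiles v in V^n, agents indexed by 'I_n (agent i+1 of the paper is i). *)
Definition profile (n : nat) := {ffun 'I_n -> vlab}.

(* Individual distributions of Gamma^eps: agents 1,2 (indices 0,1) are high-stakes. *)
Definition prob_i (R : realType) (n : nat) (eps : R) (i : 'I_n) (x : vlab) : R :=
  if (val i < 2)%N then
    match x with LmM2 => 1/2 - eps | Lm1 => eps | L1 => eps | LM => 1/2 - eps end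
  else
    match x with LmM2 => eps | Lm1 => 1/2 - eps | L1 => 1/2 - eps | LM => eps end.

Definition prob_profile (R : realType) (n : nat) (eps : R) (v : profile n) : R :=
  \prod_(i < n) prob_i eps i (v i).

Definition welfare (R : realType) (n : nat) (M eps : R) (f : profile n -> R) : R :=
  \sum_(v : profile n) prob_profile eps v * (f v * \sum_(i < n) vval M (v i)).

Definition is_SCF (R : realType) (n : nat) (f : profile n -> R) : Prop :=
  forall v, 0 <= f v <= 1.

Definition permute_profile (n : nat) (s : 'S_n) (v : profile n) : profile n :=
  [ffun i => v (s i)].

Definition anonymous (R : realType) (n : nat) (f : profile n -> R) : Prop :=
  forall (v : profile n) (s : 'S_n), f v = f (permute_profile s v).

Definition chi (R : realType) (n : nat) (M : R) (v : profile n) : {set 'I_n} :=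
  [set i | 0 < vval M (v i)].

Definition ordinal_scf (R : realType) (n : nat) (M : R) (f : profile n -> R) : Prop :=
  forall v v' : profile n, chi M v = chi M v' -> f v = f v'.

Definition unanimity (R : realType) (n : nat) (M : R) (v : profile n) : R :=
  if #|chi M v| == n then 1 else 0.

Definition condA (R : realType) (n : nat) (M : R) : Prop :=
  (2 / n%:R) * (- M ^+ 2 + M + n%:R - 2) + ((n%:R - 2) / n%:R) * (2 * M + n%:R - 4) < 0.

Definition condB (R : realType) (n : nat) (M : R) : Prop :=
  2 * M - (n%:R - 2) > 0.

(* Main.v *)
Require Import Defs.
From mathcomp Require Import all_boot all_order all_algebra all_fingroup reals.
From mathcomp Require Import ring lra.
Set Implicit Arguments. Unset Strict Implicit. Unset Printing Implicit Defensive.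
Import Order.TTheory GRing.Theory Num.Theory.
Local Open Scope ring_scope.

Lemma sum_vlab (R : realType) (F : vlab -> R) :
  \sum_(x : vlab) F x = F LmM2 + F Lm1 + F L1 + F LM.
Proof.
rewrite (reindex vlab_decode); last first.
  exists vlab_code => [i _|x _]; last exact: vlab_codeK.
  case: i => -[|[|[|[|k]]]] Hi //=; apply: val_inj; rewrite /= ?inordK //.
by rewrite !big_ord_recr big_ord0 /= add0r.
Qed.

Definition posb (R : realType) (M : R) (x : vlab) : bool := 0 < vval M x.

Lemma posbE (R : realType) (M : R) : 0 < M ->
  [/\ posb M LmM2 = false, posb M Lm1 = false, posb M L1 = true & posb M LM = true].
Proof.
move=> M0; rewrite /posb /=; split => //.
- by apply/negbTE; rewrite -leNgt oppr_le0 sqr_ge0.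
- by apply/negbTE; rewrite -leNgt oppr_le0.
- by rewrite ltr01.
Qed.

Lemma half_sum (R : realType) (n : nat) (M eps : R) (j : 'I_n) (b : bool) :
  0 < M -> \sum_(x | posb M x == b) prob_i eps j x = 1/2.
Proof.
move=> M0; case: (posbE M0) => p1 p2 p3 p4.
rewrite big_mkcond sum_vlab /= p1 p2 p3 p4 /prob_i.
by case: b; case: ifP => _ /=; lra.
Qed.

Definition ev (R : realType) (n : nat) (M eps : R) (A : {set 'I_n}) (i : 'I_n) : R :=
  \sum_(x | posb M x == (i \in A)) prob_i eps i x * vval M x.

Lemma chi_family (R : realType) (n : nat) (M : R) (A : {set 'I_n}) (v : profile n) :
  (chi M v == A) = (v \in family (fun j => [pred x | posb M x == (j \in A)])).
Proof.
apply/eqP/familyP => [<- j | H].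
  by rewrite inE /chi inE.
apply/setP => j; rewrite /chi inE; by have := H j; rewrite inE => /eqP.
Qed.

Lemma class_sum (R : realType) (n : nat) (M eps : R) (A : {set 'I_n}) (i : 'I_n) :
  0 < M ->
  \sum_(v : profile n | chi M v == A) prob_profile eps v * vval M (v i)
  = (1/2)^+(n.-1) * ev M eps A i.
Proof.
move=> M0.
rewrite (eq_bigl _ _ (chi_family M A)).
pose F (j : 'I_n) (x : vlab) := prob_i eps j x * (if j == i then vval M x else 1).
transitivity (\sum_(v in family (fun j => [pred x | posb M x == (j \in A)]))
                 \prod_(j < n) F j (v j)).
  apply: eq_bigr => v _; rewrite /prob_profile (bigD1 i) //= [RHS](bigD1 i) //=.
  rewrite /F eqxx -mulrA [_ * vval M _]mulrC mulrA; congr (_ * _).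
  by apply: eq_bigr => j /negbTE ->; rewrite mulr1.
rewrite -bigA_distr_big_dep (bigD1 i) //= mulrC; congr (_ * _).
  rewrite (eq_bigr (fun j => 1/2)); last first.
    move=> j /negbTE ji; rewrite (eq_bigr (fun x => prob_i eps j x)).
      exact: half_sum.
    by move=> x _; rewrite /F ji mulr1.
  by rewrite prodr_const cardC1 card_ord.
by apply: eq_bigr => x _; rewrite /F eqxx.
Qed.

Definition rep (n : nat) (A : {set 'I_n}) : profile n :=
  [ffun i => if i \in A then L1 else Lm1].

Lemma chi_rep (R : realType) (n : nat) (M : R) (A : {set 'I_n}) :
  0 < M -> chi M (rep A) = A.
Proof.
move=> M0; case: (posbE M0) => p1 p2 p3 p4.
apply/setP => j; rewrite /chi inE /rep ffunE.
by case: (j \in A); [move: p3 | move: p2]; rewrite /posb.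
Qed.

Lemma welfare_dec (R : realType) (n : nat) (M eps : R) (f : profile n -> R) :
  0 < M -> ordinal_scf M f ->
  welfare M eps f = (1/2)^+(n.-1) *
     \sum_(A : {set 'I_n}) f (rep A) * \sum_(i < n) ev M eps A i.
Proof.
move=> M0 ordf.
rewrite /welfare (partition_big (chi M) predT) //= mulr_sumr.
apply: eq_bigr => A _.
rewrite (eq_bigr (fun v => f (rep A) * \sum_(i < n) prob_profile eps v * vval M (v i))); last first.
  move=> v /eqP chiv; rewrite (ordf v (rep A)); last by rewrite chi_rep.
  by rewrite mulrCA mulr_sumr.
rewrite -mulr_sumr exchange_big /=.
rewrite (eq_bigr (fun i => (1/2)^+(n.-1) * ev M eps A i)); last by move=> i _; exact: class_sum.
by rewrite -mulr_sumr mulrCA.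
Qed.

Lemma key (R : realType) (n : nat) (phi : {set 'I_n} -> R) (al be : 'I_n -> R) :
  (0 < n)%N -> (forall A, 0 <= phi A <= 1) ->
  (forall (A : {set 'I_n}) i j, phi [set tperm i j x | x in A] = phi A) ->
  0 <= \sum_i al i -> \sum_i be i <= \sum_i al i ->
  (n%:R - 1) * \sum_i al i + \sum_i be i <= 0 ->
  \sum_(A : {set 'I_n}) phi A * \sum_i (if i \in A then al i else be i) <= \sum_i al i.
Proof.
move=> n0 phi01 phiinv P0 NP HPN.
set P := \sum_i al i in P0 NP HPN *; set N := \sum_i be i in NP HPN *.
pose Phi i := \sum_(A : {set 'I_n}) phi A * (if i \in A then 1 else 0).
pose Psi := \sum_(A : {set 'I_n}) phi A.
have PhiE : forall i j, Phi i = Phi j.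
  move=> i j; rewrite /Phi [LHS](reindex_inj (imset_inj (@perm_inj _ (tperm i j)))) /=.
  apply: eq_bigr => A _; rewrite phiinv.
  by rewrite -[X in X \in _](tpermR i j) mem_imset //; exact: perm_inj.
pose i0 : 'I_n := Ordinal n0.
have E1 : \sum_(A : {set 'I_n}) phi A * \sum_i (if i \in A then al i else be i)
          = Phi i0 * P + (Psi - Phi i0) * N.
  rewrite (eq_bigr (fun A => \sum_i phi A * (if i \in A then al i else be i)));
    last by move=> A _; rewrite mulr_sumr.
  rewrite exchange_big /=.
  rewrite (eq_bigr (fun i => al i * Phi i0 + be i * (Psi - Phi i0))).
    by rewrite big_split /= -!mulr_suml !(mulrC _ P) !(mulrC _ N).
  move=> i _; rewrite -(PhiE i) /Phi /Psi !mulr_sumr -sumrB !mulr_sumr -big_split /=.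
  by apply: eq_bigr => A _; case: (i \in A); rewrite ?mulr1 ?mulr0 ?subr0 ?subrr; ring.
have E2 : n%:R * Phi i0 = \sum_(A : {set 'I_n}) phi A * #|A|%:R.
  have -> : n%:R * Phi i0 = \sum_(i < n) Phi i.
    rewrite (eq_bigr (fun _ => Phi i0)); last by move=> i _; exact: PhiE.
    by rewrite sumr_const card_ord mulr_natl.
  rewrite /Phi exchange_big /=; apply: eq_bigr => A _.
  by rewrite -mulr_sumr -big_mkcond /= sumr_const.
have n0R : 0 < (n%:R : R) by rewrite ltr0n.
rewrite E1 -(ler_pM2l n0R).
have -> : n%:R * (Phi i0 * P + (Psi - Phi i0) * N)
          = (n%:R * Phi i0) * (P - N) + n%:R * Psi * N by ring.
clearbody P N.
rewrite E2 /Psi.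
have -> : (\sum_(A : {set 'I_n}) phi A * #|A|%:R) * (P - N) + n%:R * (\sum_(A : {set 'I_n}) phi A) * N
   = \sum_(A : {set 'I_n}) (phi A * #|A|%:R * (P - N) + n%:R * phi A * N).
  rewrite big_split /= !mulr_suml mulr_sumr mulr_suml; congr (_ + _).
rewrite [leRHS](_ : _ = \sum_(A : {set 'I_n}) if A == setT then n%:R * P else 0); last first.
  by rewrite -big_mkcond /= big_pred1_eq.
apply: ler_sum => A _.
case/andP: (phi01 A) => ph0 ph1.
case: eqP => [-> | /eqP AT].
  rewrite cardsT card_ord.
  have -> : phi [set: 'I_n] * n%:R * (P - N) + n%:R * phi [set: 'I_n] * N
          = phi [set: 'I_n] * (n%:R * P) by ring.
  rewrite -[leRHS](mul1r (n%:R * P)); apply: ler_wpM2r => //.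
    exact: mulr_ge0 (ltW n0R) P0.
  by case/andP: (phi01 [set: 'I_n]).
have cA : (#|A| < n)%N.
  by have := @proper_card _ A [set: 'I_n]; rewrite properT AT cardsT card_ord; apply.
have cAR : (#|A|%:R : R) <= n%:R - 1 by rewrite lerBrDr natr1 ler_nat.
have -> : phi A * #|A|%:R * (P - N) + n%:R * phi A * N
          = phi A * (#|A|%:R * (P - N) + n%:R * N) by ring.
apply: mulr_ge0_le0 => //.
have : #|A|%:R * (P - N) <= (n%:R - 1) * (P - N).
  by apply: ler_wpM2r => //; rewrite subr_ge0.
lra.
Qed.

Definition alv (R : realType) (n : nat) (M eps : R) (i : 'I_n) : R :=
  \sum_(x | posb M x == true) prob_i eps i x * vval M x.
Definition bev (R : realType) (n : nat) (M eps : R) (i : 'I_n) : R :=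
  \sum_(x | posb M x == false) prob_i eps i x * vval M x.

Lemma ev_case (R : realType) (n : nat) (M eps : R) (A : {set 'I_n}) (i : 'I_n) :
  ev M eps A i = if i \in A then alv M eps i else bev M eps i.
Proof. by rewrite /ev; case: (i \in A). Qed.

Lemma alv_val (R : realType) (n : nat) (M eps : R) (i : 'I_n) : 0 < M ->
  alv M eps i = if (i < 2)%N then eps + (1/2 - eps) * M else (1/2 - eps) + eps * M.
Proof.
move=> M0; case: (posbE M0) => p1 p2 p3 p4.
rewrite /alv big_mkcond sum_vlab /= p1 p2 p3 p4 /prob_i.
by case: ifP => _ /=; ring.
Qed.

Lemma bev_val (R : realType) (n : nat) (M eps : R) (i : 'I_n) : 0 < M ->
  bev M eps i = if (i < 2)%N then - (1/2 - eps) * M ^+ 2 - eps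
                else - eps * M ^+ 2 - (1/2 - eps).
Proof.
move=> M0; case: (posbE M0) => p1 p2 p3 p4.
rewrite /bev big_mkcond sum_vlab /= p1 p2 p3 p4 /prob_i.
by case: ifP => _ /=; ring.
Qed.

Lemma sum3 (R : realType) (m : nat) (F : 'I_m.+3 -> R) (a c : R) :
  (forall i, F i = if (i < 2)%N then a else c) ->
  \sum_i F i = 2 * a + (m%:R + 1) * c.
Proof.
move=> H; rewrite !big_ord_recl !H /=.
rewrite (eq_bigr (fun _ => c)); last by move=> i _; rewrite H !lift0.
rewrite sumr_const card_ord -[c *+ _]mulr_natl -natr1; ring.
Qed.

Lemma unan_ordinal (R : realType) (n : nat) (M : R) : ordinal_scf M (@unanimity R n M).
Proof. by move=> v v' e; rewrite /unanimity e. Qed.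

Lemma rep_perm (n : nat) (A : {set 'I_n}) (i j : 'I_n) :
  permute_profile (tperm i j) (rep A) = rep [set tperm i j x | x in A].
Proof.
apply/ffunP => x; rewrite !ffunE.
by rewrite -{2}(tpermK i j x) mem_imset //; exact: perm_inj.
Qed.

Unset Implicit Arguments.

Theorem lemma4 (R : realType) (n : nat) (M : R) :
  (3 <= n)%N -> 0 < M -> condA n M -> condB n M ->
  exists eps0 : R, 0 < eps0 /\
    forall eps : R, 0 < eps -> eps < eps0 ->
      forall f : profile n -> R,
        is_SCF f -> ordinal_scf M f -> anonymous f ->
        welfare M eps f <= welfare M eps (@unanimity R n M).
Proof.
case: n => [|[|[|m]]] // _ M0 hA _.
set k : R := m%:R.
have k0 : 0 <= k by rewrite /k ler0n.
pose Pe (e : R) := 2 * (e + (1/2 - e) * M) + (k + 1) * ((1/2 - e) + e * M).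
pose Ne (e : R) := 2 * (- (1/2 - e) * M ^+ 2 - e) + (k + 1) * (- e * M ^+ 2 - (1/2 - e)).
pose Fe (e : R) := (k + 2) * Pe e + Ne e.
pose F0 := Fe 0. pose K := Fe 1 - Fe 0.
have FeE : forall e, Fe e = F0 + e * K by move=> e; rewrite /F0 /K /Fe /Pe /Ne; ring.
have F0neg : F0 < 0.
  move: hA; rewrite /condA -addn3 natrD -/k.
  have -> : 2 / (k + 3%:R) * (- M ^+ 2 + M + (k + 3%:R) - 2) +
     (k + 3%:R - 2) / (k + 3%:R) * (2 * M + (k + 3%:R) - 4) = 2 * F0 / (k + 3).
    by rewrite /F0 /Fe /Pe /Ne; field; rewrite lt0r_neq0 //; lra.
  by rewrite ltr_pdivrMr; lra.
pose D := `|K| - 4 * F0 + 1.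
have D0 : 0 < D by rewrite /D; have := normr_ge0 K; lra.
exists (- F0 / D); split; first by rewrite divr_gt0 //; lra.
move=> eps eps0 epsD f scf ordf anf.
rewrite ltr_pdivlMr // /D in epsD.
have KK : eps * K <= eps * `|K| by apply: ler_wpM2l; [exact: ltW | exact: real_ler_norm (num_real K)].
have eps4 : eps < 1/4.
  have : 0 <= eps * (`|K| + 1) by rewrite mulr_ge0 ?ltW //; have := normr_ge0 K; lra.
  nra.
have Fneg : Fe eps <= 0 by rewrite FeE; nra.
rewrite !welfare_dec //; last exact: unan_ordinal.
rewrite ler_pM2l; last by rewrite exprn_gt0 //; lra.
have evE : forall A : {set 'I_m.+3}, \sum_i ev M eps A i =
     \sum_i (if i \in A then alv M eps i else bev M eps i).
  by move=> A; apply: eq_bigr => i _; rewrite ev_case.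
rewrite (eq_bigr (fun A => f (rep A) * \sum_i (if i \in A then alv M eps i else bev M eps i)));
  last by move=> A _; rewrite evE.
have -> : \sum_(A : {set 'I_m.+3}) unanimity M (rep A) * \sum_(i < m.+3) ev M eps A i
          = \sum_(i < m.+3) alv M eps i.
  rewrite (bigD1 [set: 'I_m.+3]) //= [X in _ + X]big1 ?addr0.
    rewrite /unanimity chi_rep // cardsT card_ord eqxx mul1r evE.
    by apply: eq_bigr => i _; rewrite in_setT.
  move=> A AT; rewrite /unanimity chi_rep //.
  have cA : (#|A| < m.+3)%N.
    by have := @proper_card _ A [set: 'I_m.+3]; rewrite properT AT cardsT card_ord; apply.
  by rewrite (ltn_eqF cA) mul0r.
have Pv : \sum_(i < m.+3) alv M eps i = Pe eps.
  by rewrite (sum3 (a := eps + (1/2 - eps) * M) (c := (1/2 - eps) + eps * M)) //;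
     move=> i; exact: alv_val.
have Nv : \sum_(i < m.+3) bev M eps i = Ne eps.
  by rewrite (sum3 (a := - (1/2 - eps) * M ^+ 2 - eps) (c := - eps * M ^+ 2 - (1/2 - eps))) //;
     move=> i; exact: bev_val.
have a0 : 0 <= eps + (1/2 - eps) * M by nra.
have c0 : 0 <= (1/2 - eps) + eps * M by nra.
have M2 : 0 <= M ^+ 2 by rewrite sqr_ge0.
have b0 : - (1/2 - eps) * M ^+ 2 - eps <= 0 by nra.
have d0 : - eps * M ^+ 2 - (1/2 - eps) <= 0 by nra.
have P0 : 0 <= Pe eps by rewrite /Pe; nra.
have N0 : Ne eps <= 0 by rewrite /Ne; nra.
apply: key => //.
- by move=> A i j; rewrite -rep_perm -anf.
- by rewrite Pv.
- by rewrite Pv Nv; lra.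
- rewrite Pv Nv -addn3 natrD -/k.
  have -> : k + 3%:R - 1 = k + 2 by lra.
  exact: Fneg.
Qed.
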